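(* Let $G$ be a graph with vertex set $V$, each vertex carrying a finite-dimensional Hilbert space, let $\alpha$ be a QCA of range $R$, let $F\subseteq V$, and let $\mathcal{P}(\alpha,F)$ be the commutant of $\mathcal{A}(\mathrm{Int}(F))$ in $\alpha(\mathcal{A}(F))$. Then $\mathcal{P}(\alpha,F)$ is a $2R$-visibly simple algebra.
   Context: For a set $S$ of sites, $\mathcal{A}(S)$ is the algebra of operators supported on $S$ (operators on $\bigotimes_{x\in S}\mathcal{H}_x$ tensored with the identity); the support of an operator is the minimal such set (scalars have empty support). A QCA of range $R$ is a $*$-automorphism $\alpha$ of the full operator algebra such that for each site $x$ and each $O$ supported on $\{x\}$, $\alpha(O)$ is supported on sites within graph distance $R$ of $x$. $\mathrm{Int}(F)=\{x: \text{all sites within distance } R \text{ of } x \text{ lie in } F\}$. An algebra $\mathcal{A}$ is $l$-visibly simple if for every $O\in\mathcal{A}$ and every site $x$ in the support of $O$ there is $P\in\mathcal{A}$ supported within distance $l$ of $x$ with $[O,P]\ne0$. *)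

(* Defs.v *)
From HB Require Import structures.
From mathcomp Require Import all_boot all_order all_algebra.
Set Implicit Arguments. Unset Strict Implicit. Unset Printing Implicit Defensive.
Import Order.TTheory GRing.Theory Num.Theory.
Local Open Scope ring_scope.

Section QCA.
Variables (C : numClosedFieldType) (V : finType) (d : V -> nat).

(* Basis configurations of the total Hilbert space  (x) _{x in V} C^(d x). *)
Definition cfg := {dffun forall x : V, 'I_(d x)}.

Definition op := cfg -> cfg -> C.

Definition opmul (A B : op) : op := fun s t => \sum_(u : cfg) A s u * B u t.
Definition opadd (A B : op) : op := fun s t => A s t + B s t.
Definition opscale (c : C) (A : op) : op := fun s t => c * A s t.
Definition opadj (A : op) : op := fun s t => Num.conj (A t s).

Definition agree_off (S : {set V}) (s t : cfg) : bool :=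
  [forall x, (x \notin S) ==> (s x == t x)].
Definition agree_on (S : {set V}) (s t : cfg) : bool :=
  [forall x, (x \in S) ==> (s x == t x)].

(* O is in A(S), i.e. O = O' (x) Id_{V \ S}. *)
Definition supported (S : {set V}) (O : op) : bool :=
  [forall s, forall t, agree_off S s t || (O s t == 0)] &&
  [forall s, forall t, forall s', forall t',
     [&& agree_off S s t, agree_off S s' t', agree_on S s s' & agree_on S t t']
       ==> (O s t == O s' t')].

Definition supp (O : op) : {set V} := \bigcap_(S : {set V} | supported S O) S.

Definition star_automorphism (a : op -> op) : Prop :=
  [/\ forall A B, a (opadd A B) = opadd (a A) (a B),
      forall c A, a (opscale c A) = opscale c (a A),
      forall A B, a (opmul A B) = opmul (a A) (a B),
      forall A, a (opadj A) = opadj (a A)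
    & bijective a].

Variable e : rel V.

Fixpoint ball (n : nat) (x : V) : {set V} :=
  match n with
  | 0 => [set x]
  | n'.+1 => ball n' x :|: [set y | [exists z in ball n' x, e z y]]
  end.

Definition Int (R : nat) (F : {set V}) : {set V} := [set x | ball R x \subset F].

Definition qca (R : nat) (a : op -> op) : Prop :=
  star_automorphism a /\
  forall (x : V) (O : op), supported [set x] O -> supported (ball R x) (a O).

Definition Palg (R : nat) (a : op -> op) (F : {set V}) (O : op) : Prop :=
  (exists O', supported F O' /\ a O' = O) /\
  forall P, supported (Int R F) P -> opmul O P = opmul P O.

Definition visibly_simple (l : nat) (Alg : op -> Prop) : Prop :=
  forall O, Alg O -> forall x, x \in supp O ->
    exists P, [/\ Alg P, supported (ball l x) P & opmul O P <> opmul P O].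

End QCA.

(* Main.v *)
Require Import Defs.
From mathcomp Require Import all_boot all_order all_algebra.
From Stdlib Require Import FunctionalExtensionality Classical.
Set Implicit Arguments. Unset Strict Implicit. Unset Printing Implicit Defensive.
Import Order.TTheory GRing.Theory Num.Theory.
Local Open Scope ring_scope.

Section Aux.
Variables (C : numClosedFieldType) (V : finType) (d : V -> nat).
Local Notation cfg := (cfg d).
Local Notation op := (op C d).

Lemma agree_onP (G : {set V}) (s t : cfg) :
  reflect (forall x, x \in G -> s x = t x) (agree_on G s t).
Proof.
apply: (iffP forallP) => H x.
  by move=> xG; apply/eqP; exact: (implyP (H x)).
by apply/implyP => xG; apply/eqP; exact: H.
Qed.

Lemma agree_offP (G : {set V}) (s t : cfg) :
  reflect (forall x, x \notin G -> s x = t x) (agree_off G s t).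
Proof.
apply: (iffP forallP) => H x.
  by move=> xG; apply/eqP; exact: (implyP (H x)).
by apply/implyP => xG; apply/eqP; exact: H.
Qed.

Lemma agree_offC (G : {set V}) (s t : cfg) : agree_off (~: G) s t = agree_on G s t.
Proof.
apply/agree_offP/agree_onP => H x xG.
  by apply: H; rewrite inE negbK.
by apply: H; move: xG; rewrite inE negbK.
Qed.

Lemma agree_onC (G : {set V}) (s t : cfg) : agree_on (~: G) s t = agree_off G s t.
Proof.
apply/agree_onP/agree_offP => H x xG.
  by apply: H; rewrite inE.
by apply: H; move: xG; rewrite inE.
Qed.

Lemma suppP (S : {set V}) (X : op) : supported S X <->
  ((forall s t, ~~ agree_off S s t -> X s t = 0) /\
   (forall s t s' t', agree_off S s t -> agree_off S s' t' ->
       agree_on S s s' -> agree_on S t t' -> X s t = X s' t')).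
Proof.
rewrite /supported; split.
- case/andP => /forallP H1 /forallP H2; split.
  + move=> s t nst; move/forallP: (H1 s) => /(_ t); rewrite (negbTE nst) /=.
    by move/eqP.
  + move=> s t s' t' a1 a2 a3 a4.
    move/forallP: (H2 s) => /(_ t) /forallP /(_ s') /forallP /(_ t') /implyP.
    by rewrite a1 a2 a3 a4 => /(_ isT) /eqP.
- case=> H1 H2; apply/andP; split; apply/forallP => s; apply/forallP => t.
  + case: (boolP (agree_off S s t)) => //= nst; apply/eqP; exact: H1.
  + apply/forallP => s'; apply/forallP => t'; apply/implyP => /and4P [a1 a2 a3 a4].
    apply/eqP; exact: H2.
Qed.

Definition mix (G : {set V}) (s p : cfg) : cfg :=
  @finfun V (fun z => 'I_(d z)) (fun z => if z \in G then p z else s z).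

Lemma mixE G s p z : mix G s p z = if z \in G then p z else s z.
Proof. by rewrite /mix ffunE. Qed.

Lemma mix_id G s : mix G s s = s.
Proof. by apply/ffunP => z; rewrite mixE if_same. Qed.

Lemma mix_mix G s p q : mix G (mix G s p) q = mix G s q.
Proof. by apply/ffunP => z; rewrite !mixE; case: (z \in G). Qed.


Lemma agree_onC_sym G (s t : cfg) : agree_on G s t = agree_on G t s.
Proof. by apply/agree_onP/agree_onP => H x xG; rewrite H. Qed.

Lemma agree_offC_sym G (s t : cfg) : agree_off G s t = agree_off G t s.
Proof. by apply/agree_offP/agree_offP => H x xG; rewrite H. Qed.

Lemma agree_off_mono (S S' : {set V}) (s t : cfg) :
  S \subset S' -> agree_off S s t -> agree_off S' s t.
Proof.
move=> sub /agree_offP H; apply/agree_offP => z zS; apply: H.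
by apply: contra zS; apply: (subsetP sub).
Qed.

Lemma agree_on_mono (S S' : {set V}) (s t : cfg) :
  S \subset S' -> agree_on S' s t -> agree_on S s t.
Proof.
move=> sub /agree_onP H; apply/agree_onP => z zS; apply: H; exact: (subsetP sub).
Qed.

Lemma agree_helper (S S' : {set V}) (s t s' t' : cfg) : S \subset S' ->
  agree_off S' s t -> agree_on S' s s' -> agree_on S' t t' ->
  agree_off S s' t' -> agree_off S s t.
Proof.
move=> sub a1 a3 a4 H; apply/agree_offP => z zS.
case: (boolP (z \in S')) => zS'.
  by rewrite (agree_onP _ _ _ a3 z zS') (agree_onP _ _ _ a4 z zS'); exact: (agree_offP _ _ _ H z zS).
exact: (agree_offP _ _ _ a1 z zS').
Qed.

Lemma supported_mono (S S' : {set V}) (X : op) :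
  S \subset S' -> supported S X -> supported S' X.
Proof.
move=> sub /suppP [H1 H2]; apply/suppP; split.
  move=> s t nst; apply: H1; apply: contra nst; exact: agree_off_mono.
move=> s t s' t' a1 a2 a3 a4.
case: (boolP (agree_off S s t)) => ast.
  apply: H2 => //.
  - apply: (agree_helper sub a2 _ _ ast); by rewrite agree_onC_sym.
  - exact: agree_on_mono a3.
  - exact: agree_on_mono a4.
rewrite H1 // H1 //; apply: contra ast => ast'.
exact: (agree_helper sub a1 a3 a4 ast').
Qed.

Lemma supported_setT (X : op) : supported setT X.
Proof.
apply/suppP; split.
  move=> s t /negP []; apply/agree_offP => z; by rewrite inE.
move=> s t s' t' _ _ /agree_onP a3 /agree_onP a4.
have -> : s = s' by apply/ffunP => z; apply: a3; rewrite inE.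
have -> : t = t' by apply/ffunP => z; apply: a4; rewrite inE.
done.
Qed.

Lemma supportedI (S T : {set V}) (X : op) :
  supported S X -> supported T X -> supported (S :&: T) X.
Proof.
move=> /suppP [H1 H2] /suppP [K1 K2]; apply/suppP; split.
  move=> s t nst.
  case: (boolP (agree_off S s t)) => aS; last exact: H1.
  case: (boolP (agree_off T s t)) => aT; last exact: K1.
  case/negP: nst; apply/agree_offP => z; rewrite inE negb_and => /orP [zS|zT].
    exact: (agree_offP _ _ _ aS).
  exact: (agree_offP _ _ _ aT).
move=> s t s' t' /agree_offP a1 /agree_offP a2 /agree_onP a3 /agree_onP a4.
have eq1 : X s t = X (mix S s' s) (mix S t' t).
  apply: H2.
  - by apply/agree_offP => z zS; apply: a1; rewrite inE (negbTE zS).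
  - by apply/agree_offP => z zS; rewrite !mixE (negbTE zS); apply: a2; rewrite inE (negbTE zS).
  - by apply/agree_onP => z zS; rewrite mixE zS.
  - by apply/agree_onP => z zS; rewrite mixE zS.
rewrite eq1; apply: K2.
- apply/agree_offP => z zT; rewrite !mixE; case: ifP => zS.
    by apply: a1; rewrite inE zS (negbTE zT).
  by apply: a2; rewrite inE zS.
- by apply/agree_offP => z zT; apply: a2; rewrite inE (negbTE zT) andbF.
- apply/agree_onP => z zT; rewrite !mixE; case: ifP => zS //.
  by apply: a3; rewrite inE zS zT.
- apply/agree_onP => z zT; rewrite !mixE; case: ifP => zS //.
  by apply: a4; rewrite inE zS zT.
Qed.


Lemma agree_on_refl G (s : cfg) : agree_on G s s.
Proof. by apply/agree_onP. Qed.

Lemma agree_off_refl G (s : cfg) : agree_off G s s.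
Proof. by apply/agree_offP. Qed.

Lemma mix_on G (s p : cfg) : agree_on G (mix G s p) p.
Proof. by apply/agree_onP => z zG; rewrite mixE zG. Qed.

Lemma mix_off G (s p : cfg) : agree_off G (mix G s p) s.
Proof. by apply/agree_offP => z zG; rewrite mixE (negbTE zG). Qed.

Lemma mix_eq G (u t p : cfg) : agree_on G u p -> agree_off G u t -> u = mix G t p.
Proof.
move=> /agree_onP h1 /agree_offP h2; apply/ffunP => z; rewrite mixE.
by case: ifP => zG; [apply: h1 | apply: h2; rewrite zG].
Qed.

Definition E (G : {set V}) (p q : cfg) : op := fun s t =>
  if [&& agree_on G s p, agree_on G t q & agree_off G s t] then 1 else 0.

Lemma mulXE G p q (X : op) s t :
  opmul X (E G p q) s t = if agree_on G t q then X s (mix G t p) else 0.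
Proof.
rewrite /opmul (bigD1 (mix G t p)) //= big1 => [|u nu]; last first.
  rewrite /E; case: and3P => [[h1 h2 h3]|]; last by rewrite mulr0.
  by case/negP: nu; apply/eqP; exact: mix_eq.
rewrite addr0 /E mix_on mix_off /=.
by case: (agree_on G t q); rewrite ?mulr1 ?mulr0.
Qed.

Lemma mulEX G p q (X : op) s t :
  opmul (E G p q) X s t = if agree_on G s p then X (mix G s q) t else 0.
Proof.
rewrite /opmul (bigD1 (mix G s q)) //= big1 => [|u nu]; last first.
  rewrite /E; case: and3P => [[h1 h2 h3]|]; last by rewrite mul0r.
  case/negP: nu; apply/eqP; apply: mix_eq => //; by rewrite agree_offC_sym.
rewrite addr0 /E mix_on agree_offC_sym mix_off /= andbT.
by case: (agree_on G s p); rewrite ?mul1r ?mul0r.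
Qed.

Lemma E_supported G p q : supported G (E G p q).
Proof.
apply/suppP; split.
  by move=> s t nst; rewrite /E (negbTE nst) !andbF.
move=> s t s' t' a1 a2 /agree_onP a3 /agree_onP a4; rewrite /E a1 a2 !andbT.
congr (if _ then _ else _); congr andb; apply/agree_onP/agree_onP => H z zG.
- by rewrite -a3 // H.
- by rewrite a3 // H.
- by rewrite -a4 // H.
- by rewrite a4 // H.
Qed.

Lemma commutant_E G (X : op) :
  (forall p q, opmul X (E G p q) = opmul (E G p q) X) -> supported (~: G) X.
Proof.
move=> H; apply/suppP; split.
  move=> s t; rewrite agree_offC => nst.
  have := f_equal (fun M => M s t) (H t t); rewrite /= mulXE mulEX agree_on_refl.
  by rewrite mix_id (negbTE nst).
move=> s t s' t'; rewrite !agree_offC !agree_onC.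
move=> /agree_onP a1 /agree_onP a2 /agree_offP a3 /agree_offP a4.
have := f_equal (fun M => M s t') (H s t'); rewrite /= mulXE mulEX !agree_on_refl.
have -> : mix G t' s = t.
  apply/ffunP => z; rewrite mixE; case: ifP => zG; first exact: a1.
  by rewrite a4 // zG.
have -> : mix G s t' = s'.
  apply/ffunP => z; rewrite mixE; case: ifP => zG; first by rewrite a2.
  by rewrite a3 // zG.
done.
Qed.

Lemma commutant_sites (T : {set V}) (X : op) :
  (forall z, z \notin T -> forall p q,
     opmul X (E [set z] p q) = opmul (E [set z] p q) X) -> supported T X.
Proof.
move=> H.
have H1 z : z \notin T -> supported (~: [set z]) X.
  by move=> zT; apply: commutant_E; exact: H.
have main : forall l : seq V, {subset l <= ~: T} ->
    supported (T :|: [set z | z \notin l]) X.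
  elim=> [|y l IH] sub.
    have -> : T :|: [set z | z \notin [::]] = setT by apply/setP => z; rewrite !inE orbT.
    exact: supported_setT.
  have yT : y \notin T by have := sub y (mem_head _ _); rewrite inE.
  have -> : T :|: [set z | z \notin y :: l] = (T :|: [set z | z \notin l]) :&: ~: [set y].
    apply/setP => z; rewrite !inE ?in_cons negb_or.
    case: (eqVneq z y) => [->|nz]; first by rewrite (negbTE yT) /= andbF.
    by rewrite /= andbT.
  apply: supportedI; last exact: H1.
  by apply: IH => w wl; apply: sub; rewrite in_cons wl orbT.
have := main (enum (~: T)).
have -> : T :|: [set z | z \notin enum (~: T)] = T.
  by apply/setP => z; rewrite !inE mem_enum inE negbK orbb.
by apply => w; rewrite mem_enum.
Qed.


Lemma agree_on_trans G (a b c : cfg) : agree_on G a b -> agree_on G b c -> agree_on G a c.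
Proof. by move=> /agree_onP h1 /agree_onP h2; apply/agree_onP => z zG; rewrite h1 // h2. Qed.

Lemma mix_eqE G (u s : cfg) : (mix G u s == u) = agree_on G u s.
Proof.
apply/eqP/agree_onP => [<- z zG | H]; first by rewrite mixE zG.
by apply/ffunP => z; rewrite mixE; case: ifP => // zG; rewrite H.
Qed.

Lemma sum_mix G (s sg : cfg) (g : cfg -> C) :
  (forall w, ~~ agree_on G w sg -> g w = 0) ->
  \sum_w g w = \sum_u (if agree_on G u s then g (mix G u sg) else 0).
Proof.
move=> H.
rewrite (bigID (fun w => agree_on G w sg)) /= [X in _ + X]big1 ?addr0; last first.
  by move=> w /H.
rewrite (reindex_onto (fun u => mix G u sg) (fun w => mix G w s)) /=; last first.
  move=> w hw; rewrite mix_mix; apply/eqP; by rewrite mix_eqE.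
rewrite big_mkcond; apply: eq_bigr => u _; by rewrite mix_on mix_mix mix_eqE.
Qed.

Definition blk (G : {set V}) (sg tu : cfg) (X : op) : op := fun s t =>
  if agree_on G s t then X (mix G s sg) (mix G t tu) else 0.

Lemma Yzero G (Y : op) u v : supported (~: G) Y -> ~~ agree_on G u v -> Y u v = 0.
Proof. by move=> /suppP [Y1 _] h; apply: Y1; rewrite agree_offC. Qed.

Lemma Ymix G (Y : op) u v sg : supported (~: G) Y -> agree_on G u v ->
  Y u v = Y (mix G u sg) (mix G v sg).
Proof.
move=> /suppP [_ Y2] h; apply: Y2; rewrite ?agree_offC ?agree_onC //.
- by apply: (agree_on_trans (b := sg)); [exact: mix_on | rewrite agree_onC_sym; exact: mix_on].
- by rewrite agree_offC_sym mix_off.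
- by rewrite agree_offC_sym mix_off.
Qed.

Lemma K1 G sg tu (X Y : op) s t : supported (~: G) Y ->
  opmul Y (blk G sg tu X) s t =
  if agree_on G s t then opmul Y X (mix G s sg) (mix G t tu) else 0.
Proof.
move=> hY; rewrite /opmul /blk; case: (boolP (agree_on G s t)) => ast.
  rewrite (@sum_mix G s sg (fun w => Y (mix G s sg) w * X w (mix G t tu))); last first.
    move=> w hw; rewrite (Yzero hY) ?mul0r //; apply: contra hw => h.
    rewrite agree_onC_sym in h; apply: agree_on_trans h _; exact: mix_on.
  apply: eq_bigr => u _; case: (boolP (agree_on G u s)) => aus.
    have -> : agree_on G u t by apply: agree_on_trans ast.
    by rewrite (Ymix sg hY) // agree_onC_sym.
  by rewrite (Yzero hY) ?mul0r // agree_onC_sym.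
apply: big1 => u _; case: (boolP (agree_on G u t)) => aut; last by rewrite mulr0.
rewrite (Yzero hY) ?mul0r //; apply: contra ast => h; exact: agree_on_trans aut.
Qed.

Lemma K2 G sg tu (X Y : op) s t : supported (~: G) Y ->
  opmul (blk G sg tu X) Y s t =
  if agree_on G s t then opmul X Y (mix G s sg) (mix G t tu) else 0.
Proof.
move=> hY; rewrite /opmul /blk; case: (boolP (agree_on G s t)) => ast.
  rewrite (@sum_mix G t tu (fun w => X (mix G s sg) w * Y w (mix G t tu))); last first.
    move=> w hw; rewrite (Yzero hY) ?mulr0 //; apply: contra hw => h.
    by apply: agree_on_trans h _; rewrite mix_on.
  apply: eq_bigr => u _; case: (boolP (agree_on G u t)) => aut.
    have -> : agree_on G s u by apply: agree_on_trans ast _; rewrite agree_onC_sym.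
    by rewrite (Ymix tu hY).
  by rewrite (Yzero hY) ?mulr0.
apply: big1 => u _; case: (boolP (agree_on G u t)) => aut; last first.
  by rewrite (Yzero hY) ?mulr0.
case: (boolP (agree_on G s u)) => asu; last by rewrite mul0r.
by case/negP: ast; exact: agree_on_trans aut.
Qed.

Lemma BLK1 G sg tu (X Y : op) : supported (~: G) Y ->
  opmul Y X = opmul X Y -> opmul Y (blk G sg tu X) = opmul (blk G sg tu X) Y.
Proof.
move=> hY H; apply: functional_extensionality => s; apply: functional_extensionality => t.
by rewrite K1 // K2 // H.
Qed.

Lemma BLK2 G (X Y : op) : supported (~: G) Y ->
  (forall sg tu, opmul Y (blk G sg tu X) = opmul (blk G sg tu X) Y) ->
  opmul Y X = opmul X Y.
Proof.
move=> hY H; apply: functional_extensionality => s; apply: functional_extensionality => t.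
have := f_equal (fun M => M s (mix G t s)) (H s t); rewrite /= K1 // K2 //.
by rewrite agree_onC_sym mix_on mix_id mix_mix mix_id.
Qed.

Lemma B1 G sg tu (T : {set V}) (X : op) :
  supported T X -> supported (T :\: G) (blk G sg tu X).
Proof.
move=> /suppP [X1 X2].
have hlp (s t s1 t1 : cfg) : agree_off (T :\: G) s1 t1 ->
    agree_off T (mix G s sg) (mix G t tu) -> agree_off T (mix G s1 sg) (mix G t1 tu).
  move=> /agree_offP h1 /agree_offP h2; apply/agree_offP => z zT.
  have := h2 z zT; rewrite !mixE; case: ifP => // zG _.
  by apply: h1; rewrite inE zG.
have onG (s t : cfg) : agree_off (T :\: G) s t -> agree_on G s t.
  by move=> /agree_offP h; apply/agree_onP => z zG; apply: h; rewrite inE zG.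
apply/suppP; split.
  move=> s t nst; rewrite /blk; case: ifP => // ast; apply: X1.
  apply: contra nst => h; apply/agree_offP => z; rewrite inE negb_and negbK.
  case/orP => [zG|zT]; first exact: (agree_onP _ _ _ ast).
  have := agree_offP _ _ _ h z zT; rewrite !mixE; case: ifP => // zG _.
  exact: (agree_onP _ _ _ ast).
move=> s t s1 t1 a1 a2 /agree_onP a3 /agree_onP a4; rewrite /blk (onG _ _ a1) (onG _ _ a2).
case: (boolP (agree_off T (mix G s sg) (mix G t tu))) => h.
  apply: X2 => //; first exact: hlp h.
    apply/agree_onP => z zT; rewrite !mixE; case: ifP => // zG.
    by apply: a3; rewrite inE zG.
  apply/agree_onP => z zT; rewrite !mixE; case: ifP => // zG.
  by apply: a4; rewrite inE zG.
rewrite X1 // X1 //; apply: contra h; exact: hlp.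
Qed.

Lemma blk_scalar S sg tu (X : op) s t : supported S X ->
  blk S sg tu X s t = if s == t then X sg (mix S sg tu) else 0.
Proof.
move=> /suppP [X1 X2]; rewrite /blk; case: (eqVneq s t) => [<-|nst].
  rewrite agree_on_refl; apply: X2.
  - by apply/agree_offP => z zS; rewrite !mixE (negbTE zS).
  - by apply/agree_offP => z zS; rewrite !mixE (negbTE zS).
  - exact: mix_on.
  - by apply/agree_onP => z zS; rewrite !mixE zS.
case: ifP => // ast; apply: X1; apply/negP => h; case/eqP: nst.
apply/ffunP => z; case: (boolP (z \in S)) => zS; first exact: (agree_onP _ _ _ ast).
by have := agree_offP _ _ _ h z zS; rewrite !mixE (negbTE zS).
Qed.

Lemma mul_scalar (B Y : op) c : (forall u v, B u v = if u == v then c else 0) ->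
  opmul Y B = opmul B Y.
Proof.
move=> hB; apply: functional_extensionality => s; apply: functional_extensionality => t.
rewrite /opmul (bigD1 t) //= big1 => [|u nu]; last by rewrite hB (negbTE nu) mulr0.
rewrite [in RHS](bigD1 s) //= [in RHS]big1 => [|u nu]; last by rewrite hB eq_sym (negbTE nu) mul0r.
by rewrite !addr0 !hB !eqxx mulrC.
Qed.

Lemma DL (S T : {set V}) (X Y : op) :
  supported S X -> supported T Y -> [disjoint S & T] -> opmul Y X = opmul X Y.
Proof.
move=> hX hY dST; apply: (@BLK2 S).
  by apply: supported_mono hY; rewrite -disjoints_subset disjoint_sym.
move=> sg tu; apply: mul_scalar => u v; exact: blk_scalar.
Qed.


Lemma disjS (A B : {set V}) : (forall w, w \in A -> w \in B -> False) -> [disjoint A & B].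
Proof.
move=> H; rewrite disjoints_subset; apply/subsetP => w wA; rewrite inE.
by apply/negP => wB; exact: H w wA wB.
Qed.

Lemma transfer (c c' : op -> op) (K : V -> {set V}) (S T : {set V}) (Y : op) :
  (forall A B, c (opmul A B) = opmul (c A) (c B)) -> (forall A, c (c' A) = A) ->
  (forall z Z, supported [set z] Z -> supported (K z) (c' Z)) ->
  (forall z, z \notin T -> [disjoint K z & S]) -> supported S Y -> supported T (c Y).
Proof.
move=> cM cK hK hD hY; apply: commutant_sites => z zT p q.
have hE : supported [set z] (E [set z] p q) by exact: E_supported.
have h := DL (hK z _ hE) hY (hD z zT).
by have := congr1 c h; rewrite !cM cK.
Qed.

Lemma supp_notin (O : op) x : supported (~: [set x]) O -> x \notin supp O.
Proof.
move=> h; have sub : supp O \subset ~: [set x] by rewrite /supp; exact: bigcap_inf.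
by apply/negP => /(subsetP sub); rewrite !inE eqxx.
Qed.

Variable e : rel V.

Lemma ball_tri m n x y z : y \in ball e m x -> z \in ball e n y -> z \in ball e (m + n) x.
Proof.
move=> hy; elim: n z => [|n IH] z /=.
  by rewrite inE => /eqP ->; rewrite addn0.
rewrite addnS /= inE => /orP [h|]; first by rewrite inE (IH z h).
rewrite inE => /existsP [w /andP [wb ewz]]; rewrite /= inE; apply/orP; right.
by rewrite inE; apply/existsP; exists w; rewrite IH.
Qed.

Lemma ball_sym n x y : symmetric e -> y \in ball e n x -> x \in ball e n y.
Proof.
move=> esym; elim: n y => [|n IH] y /=.
  by rewrite !inE => /eqP ->.
rewrite inE => /orP [h|]; first by rewrite inE (IH y h).
rewrite inE => /existsP [w /andP [wb ewy]].
have h1 : w \in ball e 1 y.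
  rewrite /= !inE; apply/orP; right; apply/existsP; exists y.
  by rewrite inE eqxx esym.
by have := ball_tri h1 (IH w wb); rewrite add1n.
Qed.

End Aux.

Theorem mainTheorem19 (C : numClosedFieldType) (V : finType) (e : rel V)
  (d : V -> nat) (R : nat) (a : op C d -> op C d) (F : {set V}) :
  symmetric e -> irreflexive e ->
  qca e R a ->
  visibly_simple e (2 * R) (Palg e R a F).
Proof.
move=> esym _ [[aD aZ aM aA [b abK baK]] aloc].
have bM : forall A B, b (opmul A B) = opmul (b A) (b B).
  by move=> A B; apply: (can_inj abK); rewrite aM !baK.
move=> O [[O' [hO' aO']] HO] x xO.
have [p [q Hpq]] : exists p q, opmul O (E C [set x] p q) <> opmul (E C [set x] p q) O.
  apply: NNPP => Hn; move: xO; apply/negP; apply: supp_notin; apply: commutant_E => p q.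
  by apply: NNPP => Hc; apply: Hn; exists p, q.
pose K := fun z0 => [set w | z0 \in ball e R w].
have hK : forall z Z, supported [set z] Z -> supported (K z) (b Z).
  move=> z Z hZ; apply: (@transfer _ _ _ b a (ball e R) [set z]) => //.
  by move=> w; rewrite inE => zw; rewrite disjoint_sym disjoints1.
have hE : supported [set x] (E C [set x] p q) by exact: E_supported.
have hQ' := hK x _ hE.
have nQ' : opmul O' (b (E C [set x] p q)) <> opmul (b (E C [set x] p q)) O'.
  by move=> h; apply: Hpq; have := congr1 a h; rewrite !aM aO' baK.
pose G := K x :\: F.
have hO'G : supported (~: G) O'.
  by apply: supported_mono hO'; apply/subsetP => z zF; rewrite !inE zF.
have [sg [tu Hst]] : exists sg tu, opmul O' (blk G sg tu (b (E C [set x] p q))) <>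
     opmul (blk G sg tu (b (E C [set x] p q))) O'.
  apply: NNPP => Hn; apply: nQ'; apply: (BLK2 hO'G) => sg tu.
  by apply: NNPP => Hc; apply: Hn; exists sg, tu.
pose Q'' := blk G sg tu (b (E C [set x] p q)).
have hQ'' : supported (K x :\: G) Q'' by apply: B1.
have SF : K x :\: G \subset F.
  apply/subsetP => z; rewrite !inE negb_and negbK => /andP [/orP [zF|nzK] zK] //.
  by rewrite zK in nzK.
have hX : supported (ball e (2 * R) x) (a Q'').
  apply: (@transfer _ _ _ a b K (K x :\: G)) => // z zB.
  apply: disjS => w; rewrite !inE => zw /andP [_ xw].
  apply: (negP zB); rewrite mul2n -addnn; exact: ball_tri (ball_sym esym xw) zw.
have hOI : supported (~: Int e R F) O.
  apply: commutant_sites => z; rewrite inE negbK => zI p' q'.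
  apply: HO; apply: supported_mono (E_supported _ _ _ _); by rewrite sub1set.
have [sg2 [tu2 Hst2]] : exists sg tu, opmul O (blk (Int e R F) sg tu (a Q'')) <>
     opmul (blk (Int e R F) sg tu (a Q'')) O.
  apply: NNPP => Hn.
  have nX : opmul O (a Q'') <> opmul (a Q'') O.
    by move=> h; apply: Hst; have := congr1 b h; rewrite !bM -aO' !abK.
  apply: nX; apply: (BLK2 hOI) => sg2 tu2.
  by apply: NNPP => Hc; apply: Hn; exists sg2, tu2.
pose P := blk (Int e R F) sg2 tu2 (a Q'').
have hP : supported (ball e (2 * R) x :\: Int e R F) P by apply: B1.
exists P; split => //; last by apply: supported_mono hP; exact: subsetDl.
split.
  exists (b P); split; last exact: baK.
  apply: commutant_sites => z zF p' q'.
  have hZ : supported [set z] (E C [set z] p' q') by exact: E_supported.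
  have haZ : supported (~: Int e R F) (a (E C [set z] p' q')).
    apply: supported_mono (aloc z _ hZ); apply/subsetP => w wz; rewrite inE.
    apply/negP => wI; rewrite inE in wI; apply: (negP zF).
    exact: (subsetP wI) (ball_sym esym wz).
  have hc : opmul (a (E C [set z] p' q')) (a Q'') = opmul (a Q'') (a (E C [set z] p' q')).
    rewrite -!aM; congr a; apply: (DL hQ'' hZ).
    rewrite disjoint_sym disjoints1; apply: contra zF; exact: (subsetP SF).
  have h := BLK1 sg2 tu2 haZ hc.
  by have := congr1 b h; rewrite !bM abK => ->.
move=> P0 hP0; apply: (DL hP0 hP); apply: disjS => w wI; rewrite inE wI.
by [].
Qed.
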